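(* Let $\|\cdot\|_\alpha$ be a submultiplicative norm from a dimension-invariant family, and let $A$ be an $n\times n$ matrix with a blocking of $n_t$ blocks that is strictly block diagonally dominant by columns, i.e. each $A_{j,j}$ is nonsingular and $\sum_{i\ne j}\|A_{i,j}\|_\alpha<\|A_{j,j}^{-1}\|_\alpha^{-1}$ for all $1\le j\le n_t$ (or strictly block diagonally dominant by rows, i.e. $\sum_{j\ne i}\|A_{i,j}\|_\alpha<\|A_{i,i}^{-1}\|_\alpha^{-1}$ for all $i$). Then $A$ is block strongly nonsingular and the block-sum growth factor satisfies $\rho_{\Sigma\alpha}=\max_{1\le k\le n_t}\|A^{(k)}\|_{\Sigma\alpha}/\|A\|_{\Sigma\alpha}=1$.
   Context: A dimension-invariant family of matrix norms: for every matrix $B$ and every contiguous block partition, $\max_{i,j}\|B_{i,j}\|\le\|B\|\le\sum_{i,j}\|B_{i,j}\|$. Blocking: a strictly increasing list $[1=\mathcal{I}_1<\dots<\mathcal{I}_{n_t+1}=n+1]$ defining blocks $A_{i,j}$. Block strongly nonsingular: all $A_{1:k,1:k}$ nonsingular. Block Schur complements: $A^{(1)}=A$, $A^{(k+1)}=A^{(k)}_{k+1:n_t,k+1:n_t}-A^{(k)}_{k+1:n_t,k}(A^{(k)}_{k,k})^{-1}A^{(k)}_{k,k+1:n_t}$ (blocks indexed $k+1,\dots,n_t$). Block-sum norm: $\|B\|_{\Sigma\alpha}=\sum_{i,j}\|B_{ij}\|_\alpha$ over the blocks of $B$. *)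

(* Defs.v *)
From HB Require Import structures.
From mathcomp Require Import all_boot all_order all_algebra.
Set Implicit Arguments. Unset Strict Implicit. Unset Printing Implicit Defensive.
Import Order.TTheory GRing.Theory Num.Theory.
Local Open Scope ring_scope.

(* Entry of a matrix addressed by natural-number indices (0-based);
   0 outside the matrix. *)
Definition mxnat (K : numFieldType) (m n : nat) (A : 'M[K]_(m, n)) (i j : nat) : K :=
  match (insub i : option 'I_m), (insub j : option 'I_n) with
  | Some i', Some j' => A i' j'
  | _, _ => 0
  end.

Definition subblk (K : numFieldType) (m n : nat) (A : 'M[K]_(m, n))
  (r0 c0 p q : nat) : 'M[K]_(p, q) :=
  \matrix_(i < p, j < q) mxnat A (r0 + i) (c0 + j).

(* A blocking of size n with nt blocks, 0-based:  the paper's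
   [1 = I_1 < ... < I_{nt+1} = n+1] becomes I 0 = 0 < I 1 < ... < I nt = n;
   block k (0-based) consists of indices I k, ..., I k.+1 - 1. *)
Definition is_blocking (n nt : nat) (I : nat -> nat) : Prop :=
  I 0%N = 0%N /\ I nt = n /\ (forall k, (k < nt)%N -> (I k < I k.+1)%N).

Definition blk (K : numFieldType) (m n : nat) (A : 'M[K]_(m, n))
  (I J : nat -> nat) (i j : nat) : 'M[K]_(I i.+1 - I i, J j.+1 - J j) :=
  subblk A (I i) (J j) (I i.+1 - I i) (J j.+1 - J j).

Definition norm_family (K : numFieldType) := forall m n : nat, 'M[K]_(m, n) -> K.

Definition is_norm_family (K : numFieldType) (nrm : norm_family K) : Prop :=
  forall m n : nat,
    (forall B : 'M[K]_(m, n), 0 <= nrm m n B) /\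
    (forall B : 'M[K]_(m, n), nrm m n B = 0 -> B = 0) /\
    (forall (a : K) (B : 'M[K]_(m, n)), nrm m n (a *: B) = `|a| * nrm m n B) /\
    (forall B C : 'M[K]_(m, n), nrm m n (B + C) <= nrm m n B + nrm m n C).

Definition dim_invariant (K : numFieldType) (nrm : norm_family K) : Prop :=
  forall (m n : nat) (B : 'M[K]_(m, n)) (rt ct : nat) (I J : nat -> nat),
    is_blocking m rt I -> is_blocking n ct J ->
    (forall i j, (i < rt)%N -> (j < ct)%N -> nrm _ _ (blk B I J i j) <= nrm _ _ B) /\
    nrm _ _ B <= \sum_(i < rt) \sum_(j < ct) nrm _ _ (blk B I J i j).

Definition submultiplicative (K : numFieldType) (nrm : norm_family K) : Prop :=
  forall (m n p : nat) (B : 'M[K]_(m, n)) (C : 'M[K]_(n, p)),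
    nrm _ _ (B *m C) <= nrm _ _ B * nrm _ _ C.

Definition sbdd_cols (K : numFieldType) (nrm : norm_family K) (n : nat)
  (A : 'M[K]_n) (nt : nat) (I : nat -> nat) : Prop :=
  forall j, (j < nt)%N ->
    blk A I I j j \in unitmx /\
    \sum_(i < nt | i != j :> nat) nrm _ _ (blk A I I i j)
      < (nrm _ _ (invmx (blk A I I j j)))^-1.

Definition sbdd_rows (K : numFieldType) (nrm : norm_family K) (n : nat)
  (A : 'M[K]_n) (nt : nat) (I : nat -> nat) : Prop :=
  forall i, (i < nt)%N ->
    blk A I I i i \in unitmx /\
    \sum_(j < nt | j != i :> nat) nrm _ _ (blk A I I i j)
      < (nrm _ _ (invmx (blk A I I i i)))^-1.

Definition lead_sub (K : numFieldType) (n : nat) (A : 'M[K]_n) (p : nat) : 'M[K]_p :=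
  subblk A 0 0 p p.

Definition block_strongly_nonsingular (K : numFieldType) (n : nat) (A : 'M[K]_n)
  (nt : nat) (I : nat -> nat) : Prop :=
  forall k, (1 <= k <= nt)%N -> lead_sub A (I k) \in unitmx.

(* Block Schur complements, stored in global coordinates as n x n matrices:
   schur A I k (0-based k) holds the paper's A^{(k+1)} in its trailing part
   (rows/columns with index >= I k); entries outside it are irrelevant and are
   kept from the previous step.  Recursion:
   A^{(k+1)} = A^{(k)}_{k+1:,k+1:} - A^{(k)}_{k+1:,k} (A^{(k)}_{k,k})^{-1} A^{(k)}_{k,k+1:}. *)
Fixpoint schur (K : numFieldType) (n : nat) (A : 'M[K]_n) (I : nat -> nat) (k : nat)
  : 'M[K]_n :=
  match k with
  | 0%N => A
  | k'.+1 =>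
      let S := schur A I k' in
      let D := invmx (blk S I I k' k') in
      \matrix_(i < n, j < n)
        (if (I k'.+1 <= i)%N && (I k'.+1 <= j)%N then
           S i j - \sum_(p < I k'.+1 - I k') \sum_(q < I k'.+1 - I k')
                     mxnat S i (I k' + p) * D p q * mxnat S (I k' + q) j
         else S i j)
  end.

(* Block-sum norm of A^{(k+1)} (0-based k): sum over its blocks (i,j), k <= i,j < nt. *)
Definition schur_sumnorm (K : numFieldType) (nrm : norm_family K) (n : nat)
  (A : 'M[K]_n) (nt : nat) (I : nat -> nat) (k : nat) : K :=
  \sum_(k <= i < nt) \sum_(k <= j < nt) nrm _ _ (blk (schur A I k) I I i j).

Definition growth_factor (K : numFieldType) (nrm : norm_family K) (n : nat)
  (A : 'M[K]_n) (nt : nat) (I : nat -> nat) : K :=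
  \big[Num.max/0]_(k < nt) (schur_sumnorm nrm A nt I k / schur_sumnorm nrm A nt I 0).

(* Main.v *)
Require Import Defs.
From HB Require Import structures.
From mathcomp Require Import all_boot all_order all_algebra.
From mathcomp Require Import ring.
Set Implicit Arguments. Unset Strict Implicit. Unset Printing Implicit Defensive.
Import Order.TTheory GRing.Theory Num.Theory.
Local Open Scope ring_scope.

Lemma mxnatE (K : numFieldType) m n (A : 'M[K]_(m, n)) i j (hi : (i < m)%N) (hj : (j < n)%N) :
  mxnat A i j = A (Ordinal hi) (Ordinal hj).
Proof. by rewrite /mxnat (insubT (fun x => x < m)%N hi) (insubT (fun x => x < n)%N hj). Qed.

Lemma blocking_mono n nt I : is_blocking n nt I ->
  forall i j, (i <= j <= nt)%N -> (I i <= I j)%N.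
Proof.
move=> [_ [_ hI]] i j /andP[hij hj].
elim: j hij hj => [|j IH]; first by rewrite leqn0 => /eqP ->.
rewrite leq_eqVlt => /orP[/eqP -> //|hij] hj.
apply: (leq_trans (IH hij (ltnW hj))); apply: ltnW; exact: hI.
Qed.

Lemma blocking_lt n nt I : is_blocking n nt I -> forall i, (i < nt)%N -> (I i.+1 <= n)%N.
Proof.
move=> hb i hi; have [_ [<- _]] := hb; apply: (blocking_mono hb); by rewrite hi leqnn.
Qed.

Lemma blocking_pos n nt I : is_blocking n nt I -> forall i, (i < nt)%N -> (0 < I i.+1 - I i)%N.
Proof. by move=> [_ [_ hI]] i hi; rewrite subn_gt0 hI. Qed.

Lemma blocking_find n nt I : is_blocking n nt I -> forall l, (l < n)%N ->
  exists2 j, (j < nt)%N & (I j <= l < I j.+1)%N.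
Proof.
move=> hb l; have [h0 [<- hI]] := hb.
suff: forall k, (k <= nt)%N -> (l < I k)%N -> exists2 j, (j < nt)%N & (I j <= l < I j.+1)%N.
  by move=> /(_ nt (leqnn _)).
elim=> [|k IH] hk hl; first by rewrite h0 in hl.
case: (ltnP l (I k)) => hlk; first exact: IH (ltnW hk) hlk.
by exists k => //; rewrite hlk hl.
Qed.

Lemma blocking_sum (R : nmodType) n nt I (F : nat -> R) : is_blocking n nt I ->
  \sum_(0 <= l < n) F l = \sum_(j < nt) \sum_(I j <= l < I j.+1) F l.
Proof.
move=> hb; have [h0 [hn _]] := hb; rewrite -hn.
suff: forall k, (k <= nt)%N -> \sum_(0 <= l < I k) F l = \sum_(j < k) \sum_(I j <= l < I j.+1) F l.
  by move=> /(_ nt (leqnn _)).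
elim=> [|k IH] hk; first by rewrite h0 big_ord0 big_geq.
rewrite big_ord_recr /= -IH ?(ltnW hk) // (@big_cat_nat _ _ _ (I k)) //.
by apply: (blocking_mono hb); rewrite leqnSn.
Qed.
Section Norms.
Local Unset Implicit Arguments.
Variables (K : numFieldType) (nrm : norm_family K).
Hypothesis Hn : is_norm_family nrm.
Hypothesis Hs : submultiplicative nrm.
Local Set Implicit Arguments.

Lemma nrm_ge0 m n (B : 'M[K]_(m, n)) : 0 <= nrm _ _ B.
Proof. by have [h _] := Hn m n; exact: h. Qed.

Lemma nrm_gt0 m n (B : 'M[K]_(m, n)) : B != 0 -> 0 < nrm _ _ B.
Proof.
move=> hB; rewrite lt0r nrm_ge0 andbT; apply/eqP => h.
have [_ [h0 _]] := Hn m n; by move/eqP: hB; apply; apply: h0.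
Qed.

Lemma nrmN m n (B : 'M[K]_(m, n)) : nrm _ _ (- B) = nrm _ _ B.
Proof.
have [_ [_ [hZ _]]] := Hn m n.
by rewrite -scaleN1r hZ normrN normr1 mul1r.
Qed.

Lemma nrmD m n (B C : 'M[K]_(m, n)) : nrm _ _ (B + C) <= nrm _ _ B + nrm _ _ C.
Proof. by have [_ [_ [_ h]]] := Hn m n; exact: h. Qed.

Lemma nrmB m n (B C : 'M[K]_(m, n)) : nrm _ _ (B - C) <= nrm _ _ B + nrm _ _ C.
Proof. by rewrite -(nrmN C) nrmD. Qed.

Lemma nrm_sum m n (J : finType) (P : pred J) (F : J -> 'M[K]_(m, n)) :
  nrm _ _ (\sum_(j | P j) F j) <= \sum_(j | P j) nrm _ _ (F j).
Proof.
elim/big_rec2: _ => [|j x y _ h].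
  have [_ [_ [hZ _]]] := Hn m n.
  by rewrite -(scale0r (0 : 'M[K]_(m, n))) hZ normr0 mul0r.
by apply: le_trans (nrmD _ _) _; rewrite lerD2l.
Qed.

Lemma nrm_mul3 m n p q (X : 'M[K]_(m, n)) (Y : 'M[K]_(n, p)) (Z : 'M[K]_(p, q)) :
  nrm _ _ (X *m Y *m Z) <= nrm _ _ X * nrm _ _ Y * nrm _ _ Z.
Proof.
apply: le_trans (Hs _ _ _ _ _) _; apply: ler_wpM2r; first exact: nrm_ge0.
exact: Hs.
Qed.

Lemma unit_neq0 d (X : 'M[K]_d) : (0 < d)%N -> X \in unitmx -> X != 0.
Proof.
case: d X => // d X _ hX; apply/eqP => h; move: hX; rewrite h unitmxE det0.
by rewrite unitr0.
Qed.

Lemma unit_nrm_gt0 d (X : 'M[K]_d) : (0 < d)%N -> X \in unitmx -> 0 < nrm _ _ X.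
Proof. by move=> hd hX; apply: nrm_gt0; apply: unit_neq0. Qed.

Lemma perturb d (B E : 'M[K]_d) : (0 < d)%N -> B \in unitmx ->
  nrm _ _ E * nrm _ _ (invmx B) < 1 ->
  (B - E) \in unitmx /\
  (nrm _ _ (invmx B))^-1 - nrm _ _ E <= (nrm _ _ (invmx (B - E)))^-1.
Proof.
move=> hd hB hE.
set b := nrm _ _ (invmx B); set e := nrm _ _ E.
have hb : 0 < b by apply: unit_nrm_gt0 => //; rewrite unitmx_inv.
have he : 0 <= e by exact: nrm_ge0.
have hU : (B - E) \in unitmx.
  apply/negPn/negP => hn.
  have: \det (B - E) == 0 by move: hn; rewrite unitmxE unitfE negbK.
  move/det0P => [v hv0 hv].
  have hvB : v *m B = v *m E by apply/eqP; rewrite -subr_eq0 -mulmxBr hv.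
  have hvv : v = v *m E *m invmx B by rewrite -hvB mulmxK.
  have hn0 := nrm_gt0 hv0.
  have : nrm _ _ v <= nrm _ _ v * e * b by rewrite {1}hvv nrm_mul3.
  rewrite -mulrA -{1}(mulr1 (nrm _ _ v)) ler_pM2l //.
  by move=> h; have := lt_le_trans hE h; rewrite ltxx.
split=> //.
set C := invmx (B - E); set g := nrm _ _ C.
have hg : 0 < g by apply: unit_nrm_gt0 => //; rewrite unitmx_inv.
have hC : C = invmx B + C *m E *m invmx B.
  have h1 : C *m B = 1%:M + C *m E.
    by rewrite -(mulVmx hU) mulmxBr subrK.
  by rewrite -{1}(mulmxK hB C) h1 mulmxDl mul1mx.
have h2 : g <= b + g * e * b.
  rewrite {1}/g {1}hC; apply: le_trans (nrmD _ _) _; by rewrite lerD2l nrm_mul3.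
rewrite -[g^-1]div1r ler_pdivlMr //.
have -> : (b^-1 - e) * g = b^-1 * (g - g * e * b).
  by field; exact: lt0r_neq0.
rewrite -(mulVf (lt0r_neq0 hb)); apply: ler_wpM2l; first by rewrite invr_ge0 ltW.
by rewrite lerBlDr.
Qed.

End Norms.
Lemma sum_drop_first (R : nmodType) (F : nat -> R) k nt : (k < nt)%N ->
  \sum_(k <= i < nt | i != k) F i = \sum_(k.+1 <= i < nt) F i.
Proof.
move=> hk; rewrite big_ltn_cond // eqxx /=.
rewrite [RHS]big_nat_cond big_nat_cond; apply: eq_bigl => i.
rewrite andbT; case: (boolP (k.+1 <= i < nt)%N) => //= /andP[h _].
by rewrite neq_ltn h orbT.
Qed.

Lemma sum_pick (R : nmodType) (F : nat -> R) m nt j : (m <= j < nt)%N ->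
  \sum_(m <= i < nt) F i = F j + \sum_(m <= i < nt | i != j) F i.
Proof. by move=> hj; rewrite (bigD1_seq j) ?mem_index_iota ?iota_uniq. Qed.

Section Core.
Local Unset Implicit Arguments.
Variables (K : numFieldType) (nrm : norm_family K).
Hypothesis Hn : is_norm_family nrm.
Hypothesis Hs : submultiplicative nrm.
Local Set Implicit Arguments.

Lemma core_step (d : nat -> nat) (M M' : forall i j, 'M[K]_(d i, d j)) k nt :
  (forall i, (i < nt)%N -> (0 < d i)%N) ->
  (forall j, (k <= j < nt)%N -> M j j \in unitmx /\
     \sum_(k <= i < nt | i != j) nrm _ _ (M i j) < (nrm _ _ (invmx (M j j)))^-1) ->
  (forall i j, (k < i < nt)%N -> (k < j < nt)%N ->
     M' i j = M i j - M i k *m invmx (M k k) *m M k j) ->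
  (k < nt)%N ->
  (forall j, (k.+1 <= j < nt)%N -> M' j j \in unitmx /\
     \sum_(k.+1 <= i < nt | i != j) nrm _ _ (M' i j) < (nrm _ _ (invmx (M' j j)))^-1) /\
  \sum_(k.+1 <= j < nt) \sum_(k.+1 <= i < nt) nrm _ _ (M' i j) <=
  \sum_(k <= j < nt) \sum_(k <= i < nt) nrm _ _ (M i j).
Proof.
move=> hd hdom hM' hknt.
have [hkU hk] := hdom k (introT andP (conj (leqnn k) hknt)).
set b := nrm _ _ (invmx (M k k)).
have hb : 0 < b by apply: (unit_nrm_gt0 Hn) (hd _ hknt) _; rewrite unitmx_inv.
set C := \sum_(k.+1 <= i < nt) nrm _ _ (M i k).
rewrite sum_drop_first // -/C in hk.
have hCb : C * b <= 1.
  by apply: ltW; rewrite -ltr_pdivlMr // div1r.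
have hbound : forall i j, (k < i < nt)%N -> (k < j < nt)%N ->
    nrm _ _ (M' i j) <= nrm _ _ (M i j) + b * nrm _ _ (M k j) * nrm _ _ (M i k).
  move=> i j hi hj; rewrite hM' //; apply: le_trans (nrmB Hn _ _) _.
  rewrite lerD2l; apply: le_trans (nrm_mul3 Hn Hs _ _ _) _.
  have -> : b * nrm _ _ (M k j) * nrm _ _ (M i k) = nrm _ _ (M i k) * b * nrm _ _ (M k j)
    by ring.
  by [].
have hcol : forall (P : pred nat) j, (k < j < nt)%N ->
    \sum_(k.+1 <= i < nt | P i) nrm _ _ (M' i j) <=
    \sum_(k.+1 <= i < nt | P i) nrm _ _ (M i j) +
      b * nrm _ _ (M k j) * \sum_(k.+1 <= i < nt | P i) nrm _ _ (M i k).
  move=> P j hj; rewrite mulr_sumr -big_split /=.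
  rewrite big_nat_cond [X in _ <= X]big_nat_cond; apply: ler_sum => i /andP[hi _].
  exact: hbound.
split.
  move=> j hj.
  have hkj : (k < j < nt)%N by [].
  have hkj' : (k <= j < nt)%N by case/andP: hj => h1 h2; rewrite h2 ltnW.
  have [hjU hjS] := hdom j hkj'.
  set bj := nrm _ _ (invmx (M j j)) in hjS *.
  have hbj : 0 < bj by apply: (unit_nrm_gt0 Hn) (hd _ _) _; [case/andP: hj | rewrite unitmx_inv].
  set Sp := \sum_(k.+1 <= i < nt | i != j) nrm _ _ (M i j).
  have hSj : \sum_(k <= i < nt | i != j) nrm _ _ (M i j) = nrm _ _ (M k j) + Sp.
    by rewrite big_ltn_cond // neq_ltn (andP hj).1.
  rewrite hSj in hjS.
  set E := M j k *m invmx (M k k) *m M k j.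
  have hM'jj : M' j j = M j j - E by rewrite hM'.
  set e := nrm _ _ (M j k) * b * nrm _ _ (M k j).
  have hE : nrm _ _ E <= e by exact: nrm_mul3.
  set T := \sum_(k.+1 <= i < nt | i != j) nrm _ _ (M i k).
  have hCT : C = nrm _ _ (M j k) + T by rewrite /C (sum_pick _ hj).
  have hT0 : 0 <= T by apply: sumr_ge0 => i _; exact: nrm_ge0.
  have hSp0 : 0 <= Sp by apply: sumr_ge0 => i _; exact: nrm_ge0.
  have hkj0 := nrm_ge0 Hn (M k j).
  have hjk0 := nrm_ge0 Hn (M j k).
  have hT : T * b <= 1 - nrm _ _ (M j k) * b.
    by rewrite lerBrDr -mulrDl addrC -hCT.
  have he : e <= nrm _ _ (M k j).
    have -> : e = nrm _ _ (M k j) * (nrm _ _ (M j k) * b) by rewrite /e mulrC.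
    rewrite -{2}(mulr1 (nrm _ _ (M k j))); apply: ler_wpM2l => //.
    apply: le_trans hCb; apply: ler_wpM2r; first exact: ltW.
    by rewrite hCT lerDl.
  have heb : e < bj^-1.
    apply: le_lt_trans hjS; apply: le_trans he _; by rewrite lerDl.
  have hEb : nrm _ _ E * bj < 1.
    by rewrite -ltr_pdivlMr // div1r; apply: le_lt_trans heb.
  have [hU hP] := perturb Hn Hs (hd _ (andP hj).2) hjU hEb.
  rewrite hM'jj; split=> //.
  apply: le_lt_trans (hcol (fun i => i != j) j hj) _.
  rewrite -/Sp -/T.
  have h1 : b * nrm _ _ (M k j) * T <= nrm _ _ (M k j) - e.
    have -> : b * nrm _ _ (M k j) * T = nrm _ _ (M k j) * (T * b) by ring.
    have -> : nrm _ _ (M k j) - e = nrm _ _ (M k j) * (1 - nrm _ _ (M j k) * b)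
      by rewrite /e; ring.
    exact: ler_wpM2l.
  apply: (le_lt_trans (y := Sp + (nrm _ _ (M k j) - e))); first by rewrite lerD2l.
  apply: lt_le_trans hP.
  apply: (lt_le_trans (y := bj^-1 - e)).
    by rewrite addrA [Sp + _]addrC ltrD2r.
  by rewrite lerD2l lerN2.
rewrite [X in _ <= X]big_ltn //.
apply: (le_trans (y := 0 + \sum_(k.+1 <= j < nt) \sum_(k <= i < nt) nrm _ _ (M i j))); last first.
  by rewrite lerD2r; apply: sumr_ge0 => i _; exact: nrm_ge0.
rewrite add0r big_nat_cond [X in _ <= X]big_nat_cond.
apply: ler_sum => j /andP[hj _].
apply: le_trans (hcol xpredT j hj) _.
rewrite [X in _ <= X]big_ltn //.
rewrite addrC lerD2r -/C.
have -> : b * nrm _ _ (M k j) * C = nrm _ _ (M k j) * (C * b) by ring.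
rewrite -{2}(mulr1 (nrm _ _ (M k j))); apply: ler_wpM2l => //; exact: nrm_ge0.
Qed.

End Core.
Lemma blk_ltn n nt I i (a : 'I_(I i.+1 - I i)) : is_blocking n nt I -> (i < nt)%N ->
  (I i + a < n)%N.
Proof.
move=> hb hi; apply: leq_trans (blocking_lt hb hi).
by rewrite -ltn_subRL ltn_ord.
Qed.

Lemma blk_schur_step (K : numFieldType) n (A : 'M[K]_n) nt I k i j :
  is_blocking n nt I -> (k < i < nt)%N -> (k < j < nt)%N ->
  blk (schur A I k.+1) I I i j = blk (schur A I k) I I i j -
    blk (schur A I k) I I i k *m invmx (blk (schur A I k) I I k k) *m blk (schur A I k) I I k j.
Proof.
move=> hb /andP[hki hi] /andP[hkj hj]; apply/matrixP => a b.
have ha := blk_ltn a hb hi; have hb' := blk_ltn b hb hj.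
rewrite [LHS]mxE (mxnatE _ ha hb') [schur A I k.+1]/= mxE.
have -> : (I k.+1 <= I i + a)%N && (I k.+1 <= I j + b)%N.
  apply/andP; split; apply: leq_trans (leq_addr _ _); apply: (blocking_mono hb).
    by rewrite hki ltnW.
  by rewrite hkj ltnW.
rewrite !mxE (mxnatE _ ha hb') /=.
congr (_ - _).
rewrite exchange_big; apply: eq_bigr => q _; rewrite [in RHS]mxE big_distrl /=.
apply: eq_bigr => p _.
by rewrite [blk _ _ _ i k a p]mxE [blk _ _ _ k j q b]mxE.
Qed.
Lemma max_one (K : numFieldType) nt (f : nat -> K) : (0 < nt)%N -> f 0%N = 1 ->
  (forall k, (k < nt)%N -> f k <= 1) ->
  \big[Num.max/0]_(k < nt) f k = 1.
Proof.
case: nt => [//|nt] _ h0 hle.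
rewrite big_ord_recl h0 max_l //.
elim/big_rec: _ => [|i r _ hr]; first exact: ler01.
have hi : f (bump 0 i) <= 1 by apply: hle; rewrite /bump /= add1n ltnS ltn_ord.
rewrite /Num.max /Num.Def.maxr /Order.max; case: ifP => _ //.
Qed.
Lemma mxnat0 (K : numFieldType) m n i j : mxnat (0 : 'M[K]_(m, n)) i j = 0.
Proof. by rewrite /mxnat; case: insub => [i'|//]; case: insub => [j'|//]; rewrite mxE. Qed.

Lemma subblk_mul (K : numFieldType) m p q (B : 'M[K]_(m, p)) (C : 'M[K]_(p, q)) kt J
  r0 c0 a b : is_blocking p kt J -> (r0 + a <= m)%N -> (c0 + b <= q)%N ->
  subblk (B *m C) r0 c0 a b =
  \sum_(j < kt) subblk B r0 (J j) a (J j.+1 - J j) *m subblk C (J j) c0 (J j.+1 - J j) b.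
Proof.
move=> hJ ha hb; apply/matrixP => s t.
have hs : (r0 + s < m)%N by apply: leq_trans ha; rewrite ltn_add2l ltn_ord.
have ht : (c0 + t < q)%N by apply: leq_trans hb; rewrite ltn_add2l ltn_ord.
rewrite mxE (mxnatE _ hs ht) mxE summxE.
pose g l := mxnat B (r0 + s) l * mxnat C l (c0 + t).
transitivity (\sum_(0 <= l < p) g l).
  rewrite big_mkord; apply: eq_bigr => l _.
  have el : Ordinal (ltn_ord l) = l by apply: val_inj.
  by rewrite /g (mxnatE _ hs (ltn_ord l)) (mxnatE _ (ltn_ord l) ht) el.
rewrite (blocking_sum _ hJ); apply: eq_bigr => j _.
rewrite mxE -{1}[J j]add0n big_addn big_mkord; apply: eq_bigr => u _.
by rewrite !mxE addnC.
Qed.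
Lemma blocking_prefix n nt I k : is_blocking n nt I -> (k <= nt)%N -> is_blocking (I k) k I.
Proof.
move=> [h0 [_ hI]] hk; split=> //; split=> // i hi; apply: hI.
exact: leq_trans hi hk.
Qed.

Lemma lead_blk (K : numFieldType) n (A : 'M[K]_n) nt I k i j :
  is_blocking n nt I -> (k <= nt)%N -> (i < k)%N -> (j < k)%N ->
  blk (lead_sub A (I k)) I I i j = blk A I I i j.
Proof.
move=> hb hk hi hj; have hb' := blocking_prefix hb hk.
apply/matrixP => a b; rewrite !mxE.
rewrite (mxnatE _ (blk_ltn a hb' hi) (blk_ltn b hb' hj)) mxE /=.
by rewrite !add0n.
Qed.

Section Nonsing.
Local Unset Implicit Arguments.
Variables (K : numFieldType) (nrm : norm_family K).
Hypothesis Hn : is_norm_family nrm.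
Hypothesis Hs : submultiplicative nrm.
Local Set Implicit Arguments.

Lemma sbdd_nonsing m (L : 'M[K]_m) k I : is_blocking m k I -> sbdd_cols nrm L k I ->
  L \in unitmx.
Proof.
move=> hb hd; apply/negPn/negP => hn.
have : \det L^T == 0 by move: hn; rewrite unitmxE unitfE negbK det_tr.
move/det0P => [v hv0 hv].
set x := v^T.
have hx : L *m x = 0 by rewrite /x -(trmxK L) -trmx_mul hv trmx0.
pose d j := (I j.+1 - I j)%N.
pose xb j : 'M[K]_(d j, 1) := subblk x (I j) 0 (d j) 1.
have hsum : forall i, (i < k)%N -> \sum_(j < k) blk L I I i j *m xb j = 0.
  move=> i hi.
  have hi1 : (I i + d i <= m)%N.
    rewrite /d subnKC; first by move: (blocking_lt hb hi).
    have := blocking_mono hb (i:=i) (j:=i.+1); apply; by rewrite leqnSn hi.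
  rewrite -(@subblk_mul K m m 1 L x k I (I i) 0 (d i) 1 hb hi1 (leqnn _)).
  by rewrite hx; apply/matrixP => a b; rewrite !mxE mxnat0.
have [j0 hj0] : exists j0 : 'I_k, xb j0 != 0.
  case: (boolP [exists j0 : 'I_k, xb j0 != 0]) => [/existsP //|/existsPn hall].
  exfalso; move/eqP: hv0; apply.
  have hx0 : x = 0.
    apply/matrixP => l c; rewrite (ord1 c) [RHS]mxE.
    have [j hj /andP[h1 h2]] := blocking_find hb (ltn_ord l).
    have := hall (Ordinal hj); rewrite negbK => /eqP hxj.
    have hl : (l - I j < d j)%N by rewrite /d ltn_sub2r //; exact: leq_ltn_trans h2.
    move: (congr1 (fun M : 'M[K]_(d j, 1) => M (Ordinal hl) ord0) hxj).
    rewrite !mxE /= subnKC // add0n (mxnatE _ (ltn_ord l) (ltn0Sn 0)).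
    have el : Ordinal (ltn_ord l) = l by apply: val_inj.
    by rewrite el /x mxE; apply.
  by rewrite -(trmxK v) -/x hx0 trmx0.
pose b (j : nat) := nrm _ _ (invmx (blk L I I j j)).
have hbp : forall j, (j < k)%N -> 0 < b j.
  move=> j hj; have [hU _] := hd j hj.
  apply: (unit_nrm_gt0 Hn); [by move: (blocking_pos hb hj) | by rewrite unitmx_inv].
pose c (j : nat) := \sum_(i < k | i != j :> nat) nrm _ _ (blk L I I i j).
have hkey : forall i : 'I_k, nrm _ _ (xb i) / b i <=
    \sum_(j < k | j != i) nrm _ _ (blk L I I i j) * nrm _ _ (xb j).
  move=> i; have [hU _] := hd i (ltn_ord i).
  rewrite ler_pdivrMr ?hbp //.
  have := hsum i (ltn_ord i); rewrite (bigD1 i) //= => /eqP.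
  rewrite addr_eq0 => /eqP he.
  rewrite -{1}(mulKmx hU (xb i)) he.
  apply: le_trans (Hs _ _ _ _ _) _; rewrite nrmN // mulrC -/(b i).
  apply: ler_wpM2r; first exact: ltW (hbp _ (ltn_ord i)).
  apply: le_trans (nrm_sum Hn _ _) _; apply: ler_sum => j _; exact: Hs.
have h1 : \sum_(i < k) nrm _ _ (xb i) / b i <= \sum_(j < k) nrm _ _ (xb j) * c j.
  apply: le_trans (ler_sum _ (fun i _ => hkey i)) _.
  under eq_bigr do rewrite big_mkcond /=.
  rewrite exchange_big /=; apply: ler_sum => j _.
  rewrite /c mulr_sumr [X in _ <= X]big_mkcond /=; apply: ler_sum => i _.
  rewrite eq_sym; case: (i != j :> nat) => //; by rewrite mulrC.
have h2 : \sum_(j < k) nrm _ _ (xb j) * c j < \sum_(i < k) nrm _ _ (xb i) / b i.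
  rewrite (bigD1 j0) // [X in _ < X](bigD1 j0) //=.
  have [_ hc] := hd j0 (ltn_ord j0).
  apply: ltr_leD.
    by rewrite ltr_pM2l ?(nrm_gt0 Hn) //.
  apply: ler_sum => j _; apply: ler_wpM2l; first exact: nrm_ge0.
  by have [_ /ltW] := hd j (ltn_ord j).
by have := le_lt_trans h1 h2; rewrite ltxx.
Qed.

End Nonsing.
Section Cols.
Local Unset Implicit Arguments.
Variables (K : numFieldType) (nrm : norm_family K).
Hypothesis Hn : is_norm_family nrm.
Hypothesis Hs : submultiplicative nrm.
Local Set Implicit Arguments.

Lemma cols_main n (A : 'M[K]_n) nt I : (0 < n)%N -> is_blocking n nt I ->
  sbdd_cols nrm A nt I ->
  block_strongly_nonsingular A nt I /\ growth_factor nrm A nt I = 1.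
Proof.
move=> hn hb hc; split.
  move=> k /andP[hk1 hk].
  apply: (sbdd_nonsing Hn Hs (blocking_prefix hb hk)).
  move=> j hj; have hjnt : (j < nt)%N by exact: leq_trans hj hk.
  have [hU hS] := hc j hjnt.
  rewrite (lead_blk A hb hk hj hj); split=> //; apply: le_lt_trans hS.
  under eq_bigr => i _ do rewrite (lead_blk A hb hk (ltn_ord i) hj).
  rewrite -(big_mkord (fun i => i != j) (fun i => nrm _ _ (blk A I I i j))).
  rewrite -(big_mkord (fun i => i != j) (fun i => nrm _ _ (blk A I I i j))).
  rewrite (@big_cat_nat _ _ _ k 0 nt _ _ (leq0n k) hk) /= lerDl.
  by apply: sumr_ge0 => i _; exact: nrm_ge0.
have inv : forall k, (k < nt)%N ->
  (forall j, (k <= j < nt)%N -> blk (schur A I k) I I j j \in unitmx /\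
     \sum_(k <= i < nt | i != j) nrm _ _ (blk (schur A I k) I I i j)
       < (nrm _ _ (invmx (blk (schur A I k) I I j j)))^-1) /\
  schur_sumnorm nrm A nt I k <= schur_sumnorm nrm A nt I 0.
  elim=> [|k IH] hk.
    split=> //; move=> j /andP[_ hj]; have [hU hS] := hc j hj; split=> //.
    by rewrite big_mkord.
  have [hdom hsum] := IH (ltnW hk).
  have [hd' hs'] := core_step Hn Hs (d := fun i => (I i.+1 - I i)%N)
     (M := blk (schur A I k) I I) (M' := blk (schur A I k.+1) I I)
     (fun i hi => blocking_pos hb hi) hdom (fun i j hi hj => blk_schur_step A hb hi hj) (ltnW hk).
  split=> //; apply: le_trans hsum.
  by rewrite /schur_sumnorm exchange_big_nat [X in _ <= X]exchange_big_nat.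
have hnt : (0 < nt)%N.
  case: nt hb {hc inv} => // [[h0 [hn0 _]]]; by rewrite -hn0 h0 in hn.
have hs0 : 0 < schur_sumnorm nrm A nt I 0.
  rewrite /schur_sumnorm big_ltn //= [X in X + _]big_ltn //.
  have [hU _] := hc 0%N hnt.
  apply: (lt_le_trans (y := nrm _ _ (blk A I I 0 0))).
    by apply: (unit_nrm_gt0 Hn) => //; move: (blocking_pos hb hnt).
  rewrite -addrA lerDl addr_ge0 //; apply: sumr_ge0 => i _; first exact: nrm_ge0.
  by apply: sumr_ge0 => j _; exact: nrm_ge0.
rewrite /growth_factor; apply: (max_one (f := fun k => schur_sumnorm nrm A nt I k / schur_sumnorm nrm A nt I 0)) => //.
  by rewrite divff // lt0r_neq0.
move=> k hk; rewrite ler_pdivrMr // mul1r.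
by have [_ ->] := inv k hk.
Qed.

End Cols.
Lemma mxnat_tr (K : numFieldType) m n (A : 'M[K]_(m, n)) i j : mxnat A^T i j = mxnat A j i.
Proof.
rewrite /mxnat; case: (insub i) => [i'|]; case: (insub j) => [j'|] //.
by rewrite mxE.
Qed.

Lemma blk_tr (K : numFieldType) m n (A : 'M[K]_(m, n)) I J i j :
  blk A^T I J i j = (blk A J I j i)^T.
Proof. by apply/matrixP => a b; rewrite !mxE mxnat_tr. Qed.

Lemma lead_sub_tr (K : numFieldType) n (A : 'M[K]_n) p : lead_sub A^T p = (lead_sub A p)^T.
Proof. by apply/matrixP => a b; rewrite !mxE mxnat_tr. Qed.

Lemma schur_tr (K : numFieldType) n (A : 'M[K]_n) I k : schur A^T I k = (schur A I k)^T.
Proof.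
elim: k => [//|k IH] /=; rewrite IH; apply/matrixP => i j; rewrite !mxE andbC.
case: ifP => // _; congr (_ - _).
rewrite blk_tr -trmx_inv exchange_big; apply: eq_bigr => p _; apply: eq_bigr => q _.
rewrite !mxnat_tr mxE; ring.
Qed.

Definition nrmT (K : numFieldType) (nrm : norm_family K) : norm_family K :=
  fun m n B => nrm n m B^T.

Lemma nrmT_norm (K : numFieldType) (nrm : norm_family K) :
  is_norm_family nrm -> is_norm_family (nrmT nrm).
Proof.
move=> Hn m n; have [h1 [h2 [h3 h4]]] := Hn n m; rewrite /nrmT; split; last split; last split.
- by move=> B; exact: h1.
- by move=> B /h2 hB; apply: trmx_inj; rewrite hB trmx0.
- move=> a B; rewrite -h3; congr (nrm _ _ _); by apply/matrixP => i j; rewrite !mxE.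
- move=> B C; rewrite (_ : (B + C)^T = B^T + C^T) ?h4 //.
  by apply/matrixP => i j; rewrite !mxE.
Qed.

Lemma nrmT_sub (K : numFieldType) (nrm : norm_family K) :
  is_norm_family nrm -> submultiplicative nrm -> submultiplicative (nrmT nrm).
Proof.
move=> Hn Hs m n p B C; rewrite /nrmT trmx_mul mulrC; exact: Hs.
Qed.
Lemma sumnorm_tr (K : numFieldType) (nrm : norm_family K) n (A : 'M[K]_n) nt I k :
  schur_sumnorm (nrmT nrm) A^T nt I k = schur_sumnorm nrm A nt I k.
Proof.
rewrite /schur_sumnorm schur_tr exchange_big_nat; apply: eq_bigr => i _.
by apply: eq_bigr => j _; rewrite /nrmT blk_tr trmxK.
Qed.

Theorem mainTheorem12 (K : numFieldType) (nrm : norm_family K)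
  (n : nat) (A : 'M[K]_n) (nt : nat) (I : nat -> nat) :
  is_norm_family nrm -> dim_invariant nrm -> submultiplicative nrm ->
  (0 < n)%N -> is_blocking n nt I ->
  (sbdd_cols nrm A nt I \/ sbdd_rows nrm A nt I) ->
  block_strongly_nonsingular A nt I /\ growth_factor nrm A nt I = 1.
Proof.
move=> Hn _ Hs hn hb [hc|hr]; first exact: cols_main.
have Hn' := nrmT_norm Hn; have Hs' := nrmT_sub Hn Hs.
have hc : sbdd_cols (nrmT nrm) A^T nt I.
  move=> j hj; have [hU hS] := hr j hj.
  rewrite blk_tr unitmx_tr; split=> //.
  rewrite /nrmT -trmx_inv trmxK.
  under eq_bigr => i _ do rewrite blk_tr trmxK.
  exact: hS.
have [h1 h2] := cols_main Hn' Hs' hn hb hc.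
split.
  by move=> k hk; rewrite -unitmx_tr -lead_sub_tr; exact: h1.
rewrite -h2 /growth_factor; apply: eq_bigr => k _.
by rewrite !sumnorm_tr.
Qed.
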